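(* Let $\mathcal{A}$ be any poset, $H$ a Hilbert space and $(H_a)_{a\in\mathcal{A}}$ an increasing family of closed subspaces of $H$ satisfying the intersection property $\pi(\hat a\cap\hat b)=\pi_a\pi_b$ for all $a,b\in\mathcal A$. For $a\in\mathcal{A}^+$ let $s_a^\perp$ denote the orthogonal projection of $H$ onto $S_a=H_a\cap\bigcap_{b<a}H_b^\perp$ (with $b\in\mathcal A^+$ and $H_1=H$). Then for all $a,b\in\mathcal{A}^+$, $$s_a^\perp s_b^\perp=\delta_a(b)\,s_a^\perp,$$ where $\delta_a(b)=1$ if $a=b$ and $0$ otherwise.
   Context: $\hat a=\{b:b\le a\}$. $\mathcal{A}^{+}$ denotes $\mathcal{A}$ with a new element $1$ strictly greater than all elements of $\mathcal A$; $H_1=H$. For $\mathcal{B}\subseteq\mathcal{A}$, $H(\mathcal{B})$ is the closure of $\sum_{b\in\mathcal{B}}H_b$ (zero if empty), $\pi(\mathcal{B})$ the orthogonal projection onto $H(\mathcal{B})$, and $\pi_a=\pi(\hat a)$ is the orthogonal projection onto $H_a$. *)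

(* Defs.v *)
From HB Require Import structures.
From mathcomp Require Import all_boot all_order all_algebra.
From mathcomp Require Import all_classical all_reals all_analysis.
Set Implicit Arguments. Unset Strict Implicit. Unset Printing Implicit Defensive.
Import Order.TTheory GRing.Theory Num.Theory.
Import numFieldNormedType.Exports.
Local Open Scope classical_set_scope.
Local Open Scope ring_scope.

(* ip is an inner product inducing the norm of H (so H with ip is a real
   Hilbert space when H is complete). *)
Definition is_inner_product {R : realType} {H : normedModType R}
  (ip : H -> H -> R) : Prop :=
  [/\ forall (a : R) (x y z : H), ip (a *: x + y) z = a * ip x z + ip y z,
      forall x y : H, ip x y = ip y x &
      forall x : H, ip x x = `|x| ^+ 2].

Definition closed_subspace {R : realType} {H : normedModType R} (M : set H) :=
  [/\ M 0, forall (a : R) (x y : H), M x -> M y -> M (a *: x + y) & closed M].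

Definition orth {R : realType} {H : normedModType R} (ip : H -> H -> R)
  (M : set H) : set H := [set x | forall y, M y -> ip x y = 0].

Definition oproj {R : realType} {H : normedModType R} (ip : H -> H -> R)
  (M : set H) (x : H) : H :=
  xget 0 [set y | M y /\ (forall z, M z -> ip (x - y) z = 0)].

Definition Hsum {R : realType} {H : normedModType R} {A : Type}
  (Hs : A -> set H) (B : set A) : set H :=
  closure [set x | exists (n : nat) (f : 'I_n -> A) (g : 'I_n -> H),
     (forall i, B (f i) /\ Hs (f i) (g i)) /\ x = \sum_(i < n) g i].

(* A^+ = option A, where None is the new top element 1 *)
Definition leplus {d} {A : porderType d} (a b : option A) : bool :=
  match a, b with
  | _, None => true
  | None, Some _ => false
  | Some x, Some y => (x <= y)%O
  end.

Definition ltplus {d} {A : porderType d} (a b : option A) : bool :=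
  (a != b) && leplus a b.

Definition Hplus {R : realType} {H : normedModType R} {d} {A : porderType d}
  (Hs : A -> set H) (a : option A) : set H :=
  match a with Some x => Hs x | None => setT end.

Definition Sset {R : realType} {H : normedModType R} {d} {A : porderType d}
  (ip : H -> H -> R) (Hs : A -> set H) (a : option A) : set H :=
  Hplus Hs a `&` \bigcap_(b in [set b | ltplus b a]) orth ip (Hplus Hs b).

(* Main.v *)
Require Import Defs.
From HB Require Import structures.
From mathcomp Require Import all_boot all_order all_algebra.
From mathcomp Require Import all_classical all_reals all_analysis.
From mathcomp Require Import ring lra.
Set Implicit Arguments. Unset Strict Implicit. Unset Printing Implicit Defensive.
Import Order.TTheory GRing.Theory Num.Theory.
Import numFieldNormedType.Exports.
Local Open Scope classical_set_scope.
Local Open Scope ring_scope.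

Section IP.
Variables (R : realType) (H : completeNormedModType R) (ip : H -> H -> R).
Hypothesis hip : is_inner_product ip.

Lemma ipDl x y z : ip (x + y) z = ip x z + ip y z.
Proof. case: hip => h _ _; by rewrite -[x in LHS]scale1r h mul1r. Qed.
Lemma ip0l z : ip 0 z = 0.
Proof. have := ipDl 0 0 z; rewrite addr0 => h; lra. Qed.
Lemma ipZl a x z : ip (a *: x) z = a * ip x z.
Proof. case: hip => h _ _; have := h a x 0 z; by rewrite addr0 ip0l addr0. Qed.
Lemma ipC x y : ip x y = ip y x.
Proof. by case: hip. Qed.
Lemma ipNl x z : ip (- x) z = - ip x z.
Proof. by rewrite -scaleN1r ipZl mulN1r. Qed.
Lemma ipBl x y z : ip (x - y) z = ip x z - ip y z.
Proof. by rewrite ipDl ipNl. Qed.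
Lemma ipDr x y z : ip z (x + y) = ip z x + ip z y.
Proof. by rewrite ipC ipDl ![ip _ z]ipC. Qed.
Lemma ip0r z : ip z 0 = 0.
Proof. by rewrite ipC ip0l. Qed.
Lemma ipZr a x z : ip z (a *: x) = a * ip z x.
Proof. by rewrite ipC ipZl ipC. Qed.
Lemma ipBr x y z : ip z (x - y) = ip z x - ip z y.
Proof. by rewrite ipC ipBl ![ip _ z]ipC. Qed.
Lemma ipxx x : ip x x = `|x| ^+ 2.
Proof. by case: hip. Qed.
Lemma ip_sumr v n (g : 'I_n -> H) : ip v (\sum_(i < n) g i) = \sum_(i < n) ip v (g i).
Proof.
exact: (big_morph (ip v) (fun x y => ipDr x y v) (ip0r v)).
Qed.
Lemma normD2 x y : `|x + y| ^+ 2 = `|x| ^+ 2 + 2 * ip x y + `|y| ^+ 2.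
Proof. rewrite -!ipxx ipDl !ipDr (ipC y x); lra. Qed.
Lemma normB2 x y : `|x - y| ^+ 2 = `|x| ^+ 2 - 2 * ip x y + `|y| ^+ 2.
Proof. rewrite -!ipxx ipBl !ipBr (ipC y x); lra. Qed.

Definition psat (M : set H) x := [set y | M y /\ (forall z, M z -> ip (x - y) z = 0)].

Lemma ip_eq0 x : ip x x = 0 -> x = 0.
Proof. by rewrite ipxx => /eqP; rewrite sqrf_eq0 normr_eq0 => /eqP. Qed.

Lemma oproj_eq0 (M : set H) x : M 0 -> (forall z, M z -> ip x z = 0) ->
  oproj ip M x = 0.
Proof.
move=> M0 hx; rewrite /oproj; case: xgetP => // y _ [My hy].
apply: ip_eq0; have := hy y My; rewrite ipBl hx // => h; lra.
Qed.

Definition subsp (M : set H) := M 0 /\ forall y1 y2, M y1 -> M y2 -> M (y1 - y2).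

Lemma oproj_eq (M : set H) x p : subsp M -> M p ->
  (forall z, M z -> ip (x - p) z = 0) -> oproj ip M x = p.
Proof.
move=> [M0 MB] Mp hp; rewrite /oproj; case: xgetP => [y _ [My hy]|hn]; last first.
  by exfalso; apply: (hn p).
apply/eqP; rewrite -subr_eq0; apply/eqP/ip_eq0.
have h1 := hy (y - p) (MB _ _ My Mp); have h2 := hp (y - p) (MB _ _ My Mp).
have {1}-> : y - p = (x - p) - (x - y) by rewrite opprB [RHS]addrC addrA subrK.
by rewrite ipBl h2 h1 subr0.
Qed.

Lemma oproj_cases (M : set H) x :
  (oproj ip M x = 0) \/ psat M x (oproj ip M x).
Proof. rewrite /oproj; case: xgetP => [y _ P|_]; by [right|left]. Qed.

Lemma oproj_idem (M : set H) x : subsp M ->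
  oproj ip M (oproj ip M x) = oproj ip M x.
Proof.
move=> sM; have [M0 _] := sM; case: (oproj_cases M x) => [->|[My hy]].
  by apply: oproj_eq0 => // z _; rewrite ip0l.
by apply: oproj_eq => // z _; rewrite subrr ip0l.
Qed.

Lemma oproj_orth (M N : set H) x : M 0 -> N 0 ->
  (forall u v, M u -> N v -> ip v u = 0) ->
  oproj ip M (oproj ip N x) = 0.
Proof.
move=> M0 N0 hMN; case: (oproj_cases N x) => [->|[Ny hy]].
  by apply: oproj_eq0 => // z _; rewrite ip0l.
by apply: oproj_eq0 => // z Mz; apply: hMN.
Qed.
Lemma t1 (u : nat -> H) x m : u @ \oo --> m ->
  (fun n => `|x - u n| ^+ 2) @ \oo --> `|x - m| ^+ 2.
Proof.
move=> um.
have : (fun n => `|x - u n| * `|x - u n|) @ \oo --> `|x - m| * `|x - m|.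
  by apply: cvgM; apply: cvg_norm; apply: cvgB => //; exact: cvg_cst.
have -> : (fun n => `|x - u n| ^+ 2) = (fun n => `|x - u n| * `|x - u n|).
  by apply/funext => n; rewrite expr2.
by rewrite expr2.
Qed.
Lemma t2 (u : nat -> H) : cauchy_ex (u @ \oo) -> u @ \oo --> lim (u @ \oo).
Proof. move=> h. apply/cauchy_cvgP. exact: cauchy_exP. Qed.
Lemma t3 (x : H) : 2 *: x = x + x.
Proof. by rewrite scaler_nat mulr2n. Qed.
Lemma arch_inv (e : R) : 0 < e -> exists N : nat, forall n, (N <= n)%N -> n.+1%:R^-1 < e.
Proof.
move=> e0; exists (Num.truncn (e^-1)) => n hn.
rewrite -[e]invrK ltf_pV2 ?posrE ?invr_gt0 ?ltr0Sn //.
apply: lt_le_trans (truncnS_gt _) _; by rewrite ler_nat ltnS.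
Qed.
Lemma t4 (t e : R) : 0 <= t -> 0 < e -> t ^+ 2 < e ^+ 2 -> t < e.
Proof. move=> *; nra. Qed.
Lemma t5 (t c s k : R) : 0 <= s -> k = s + 1 -> c = t * k -> 0 <= - (2 * t * c) + t ^+ 2 * s -> c = 0.
Proof.
move=> s0 -> -> h.
have e : - (2 * t * (t * (s + 1))) + t ^+ 2 * s = - (t ^+ 2 * (s + 2)) by ring.
rewrite e oppr_ge0 in h.
have t2 : t ^+ 2 <= 0.
  have s2 : 0 < s + 2 by lra.
  by rewrite -(pmulr_lle0 (t ^+ 2) s2).
have : t = 0 by apply/eqP; rewrite -sqrf_eq0 eq_le t2 sqr_ge0.
by move=> ->; rewrite mul0r.
Qed.

Lemma proj_exists (M : set H) : closed_subspace M -> forall x, exists p, psat M x p.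
Proof.
move=> [M0 Mlin Mcl] x.
set E := [set r | exists2 m, M m & r = `|x - m| ^+ 2].
have lbE : has_lbound E by exists 0 => r [m _ ->]; exact: sqr_ge0.
have infE : has_inf E by split => //; exists (`|x - 0| ^+ 2); exists 0.
set d := inf E.
have hd m : M m -> d <= `|x - m| ^+ 2.
  by move=> Mm; apply: ge_inf => //; exists m.
have hu : forall n : nat, exists m, M m /\ `|x - m| ^+ 2 < d + n.+1%:R^-1.
  move=> n; have hpos : 0 < n.+1%:R^-1 :> R by rewrite invr_gt0 ltr0Sn.
  by have [r [m Mm ->] hr] := inf_adherent hpos infE; exists m.
have [u hu'] := choice hu.
have MD y1 y2 : M y1 -> M y2 -> M (y1 + y2).
  by move=> h1 h2; have := Mlin 1 y1 y2 h1 h2; rewrite scale1r.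
have MZ a y : M y -> M (a *: y).
  by move=> h; have := Mlin a y 0 h M0; rewrite addr0.
have cb n k : `|u n - u k| ^+ 2 <= 2 * n.+1%:R^-1 + 2 * k.+1%:R^-1.
  have [Mn hn] := hu' n; have [Mk hk] := hu' k.
  set w := 2^-1 *: (u n + u k).
  have Mw : M w by apply/MZ/MD.
  have hw := hd w Mw.
  have e1 : (x - u n) + (x - u k) = (x - w) + (x - w).
    have e2w : w + w = u n + u k.
      by rewrite -mulr2n -scaler_nat scalerA mulfV ?scale1r // pnatr_eq0.
    by rewrite [RHS]addrACA [LHS]addrACA -!opprD e2w.
  have e2 : (x - u n) - (x - u k) = u k - u n.
    by rewrite opprB [LHS]addrC addrA subrK.
  have := normD2 (x - u n) (x - u k); have := normB2 (x - u n) (x - u k).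
  rewrite e1 e2 (normD2 (x - w) (x - w)) (ipxx (x - w)) distrC => h1 h2.
  move: hn hk; set i1 := n.+1%:R^-1; set i2 := k.+1%:R^-1 => hn hk.
  lra.
have cu : u @ \oo --> lim (u @ \oo).
  apply: t2 => e e0.
  have e20 : 0 < e ^+ 2 / 4 by apply: divr_gt0; [exact: exprn_gt0|].
  have [N hN] := arch_inv e20.
  exists (u N); exists N => // n /= hn.
  rewrite -ball_normE /=.
  apply: t4 => //.
  apply: le_lt_trans (cb N n) _.
  have hNn : n.+1%:R^-1 <= N.+1%:R^-1 :> R.
    by rewrite lef_pV2 ?posrE ?ltr0Sn // ler_nat.
  have := hN N (leqnn N); move: hNn.
  set i1 := N.+1%:R^-1; set i2 := n.+1%:R^-1 => h1 h2.
  lra.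
set m := lim (u @ \oo).
have Mm : M m.
  apply: (@closed_cvg _ _ \oo _ u M Mcl _ _ cu); apply: nearW => n; by case: (hu' n).
have hm : `|x - m| ^+ 2 <= d.
  apply/ler_addgt0Pr => e e0.
  have [N hN] := arch_inv e0.
  have hc := @closed_cvg _ R \oo _ (fun n => `|x - u n| ^+ 2) [set r | r <= d + e] (@closed_le _ (d + e)).
  apply: hc (t1 (x:=x) cu).
  exists N => // n /= hn.
  have [_ h] := hu' n; have := hN n hn.
  move: h; set i := n.+1%:R^-1 => h1 h2; lra.
exists m; split => // z Mz.
set c := ip (x - m) z.
have key t : 0 <= - (2 * t * c) + t ^+ 2 * `|z| ^+ 2.
  have := hd _ (Mlin t z m Mz Mm).
  have -> : x - (t *: z + m) = (x - m) - t *: z.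
    by rewrite opprD addrA addrAC.
  rewrite normB2 ipZr normrZ exprMn real_normK ?num_real // -/c.
  lra.
apply: (t5 (sqr_ge0 `|z|) (erefl _) _ (key (c / (`|z| ^+ 2 + 1)))).
rewrite mulfVK //; apply: lt0r_neq0; have := sqr_ge0 `|z|; lra.
Qed.

Lemma orth_closed v : closed [set w | ip v w = 0].
Proof.
have -> : [set w | ip v w = 0] = (fun w => `|v + w| * `|v + w| - `|v - w| * `|v - w|) @^-1` [set r | r = 0].
  apply/seteqP; split => w /=; rewrite -!expr2 normD2 normB2 => h; lra.
apply: preimage_closed; last exact: closed_eq.
move=> w _.
have hD : (fun w' => v + w') @ w --> v + w by apply: cvgD; [exact: cvg_cst | exact: cvg_id].
have hB : (fun w' => v - w') @ w --> v - w by apply: cvgB; [exact: cvg_cst | exact: cvg_id].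
by apply: cvgB; apply: cvgM; apply: cvg_norm.
Qed.
End IP.

Theorem lemma3p5 (R : realType) (H : completeNormedModType R)
  (ip : H -> H -> R) (d : Order.disp_t) (A : porderType d) (Hs : A -> set H) :
  is_inner_product ip ->
  (forall a, closed_subspace (Hs a)) ->
  (forall a b : A, (a <= b)%O -> Hs a `<=` Hs b) ->
  (forall a b : A,
     oproj ip (Hsum Hs [set c | (c <= a)%O /\ (c <= b)%O])
     = oproj ip (Hs a) \o oproj ip (Hs b)) ->
  forall a b : option A,
    oproj ip (Sset ip Hs a) \o oproj ip (Sset ip Hs b)
    = (fun x => if a == b then oproj ip (Sset ip Hs a) x else 0).
Proof.
move=> hip hcl hmono hint.
have Hsub a : subsp (Hs a).
  have [M0 Ml _] := hcl a; split => // y1 y2 h1 h2.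
  by have := Ml (-1) y2 y1 h2 h1; rewrite scaleN1r addrC.
have Ssub a : subsp (Sset ip Hs a).
  split.
    split; first by case: a => [x|] //=; have [] := Hsub x.
    by move=> b _ y _; rewrite (ip0l hip).
  move=> y1 y2 [h1 o1] [h2 o2]; split.
    by case: a h1 h2 o1 o2 => [x|] //= h1 h2 _ _; have [_] := Hsub x; apply.
  by move=> b hb z hz; rewrite (ipBl hip) (o1 b hb z hz) (o2 b hb z hz) subr0.
have orthS a b : a != b -> forall u v, Sset ip Hs a u -> Sset ip Hs b v -> ip v u = 0.
  move=> nab u v [Hu ou] [Hv ov].
  case: (boolP (ltplus b a)) => [lba|nba].
    by have := ou b lba v Hv; rewrite (ipC hip).
  case: (boolP (ltplus a b)) => [lab|nab'].
    exact: ov a lab u Hu.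
  case: a b nab Hu ou Hv ov nba nab' => [x|] [y|] //=.
  move=> nxy Hu _ Hv ov nba _.
  have hyx : ~~ (y <= x)%O.
    apply: contra nba => hyx; rewrite /ltplus /= hyx andbT.
    by apply: contra nxy => /eqP [->].
  have e1 : oproj ip (Hs y) v = v.
    by apply: (oproj_eq hip (Hsub y) Hv) => z _; rewrite subrr (ip0l hip).
  have e2 : oproj ip (Hsum Hs [set c | (c <= x)%O /\ (c <= y)%O]) v = 0.
    apply: (oproj_eq0 hip).
      apply: subset_closure; exists 0%N, (fun _ => x), (fun _ => 0); split.
        by case.
      by rewrite big_ord0.
    move=> z hz.
    have hGK : [set x0 : H | exists (n : nat) (f : 'I_n -> A) (g : 'I_n -> H),
       (forall i, [set c | (c <= x)%O /\ (c <= y)%O] (f i) /\ Hs (f i) (g i)) /\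
       x0 = \sum_(i < n) g i] `<=` [set w | ip v w = 0].
      move=> w [n [f [g [hfg ->]]]]; rewrite /= (ip_sumr hip) big1 // => i _.
      have [[hf1 hf2] hg] := hfg i; apply: (ov (Some (f i))) => //.
      rewrite /ltplus /= hf2 andbT; apply/eqP => -[e].
      by move: hyx; rewrite -e hf1.
    have hK : [set w | ip v w = 0] = closure [set w | ip v w = 0].
      by apply/closure_id; exact: orth_closed hip v.
    by have := closureS hGK; rewrite -hK; apply.
  have := hint x y; move/(congr1 (fun f => f v)); rewrite /= e1 e2 => e3.
  have [p [Hp hp]] := proj_exists hip (hcl x) v.
  rewrite (oproj_eq hip (Hsub x) Hp hp) in e3.
  by have := hp u Hu; rewrite -e3 subr0.
move=> a b; apply/funext => x; case: eqVneq => [<-|nab]; first exact: (oproj_idem hip).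
have [[S0 _] [S0' _]] := (Ssub a, Ssub b).
exact: (oproj_orth hip) S0 S0' (orthS a b nab).
Qed.
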